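(* Let $G$ be a simple connected graph and let $v$ be a real eigenvector of $\mathcal M$ with $\mathcal Mv=\mu v$, $\mu>0$. Let $S=\{i: v_i\ge0\}$ and let $\theta\in[0,\pi/2)$ be the angle between $|v|=(|v_1|,\dots,|v_n|)^{\mathsf T}$ and $\delta$. If $\mu>\tan^2\theta$, then $Q(S)>0$.
   Context: $G=(V,E)$ is a finite, undirected, unweighted, simple connected graph with adjacency matrix $A$, degrees $d_i$, $D=\mathrm{Diag}(d_i)$, $\delta=(\sqrt{d_1},\dots,\sqrt{d_n})^{\mathsf T}$, $\mathrm{vol}\, S=\sum_{i\in S}d_i$, $\mathbb 1_S$ the characteristic vector of $S$. $\mathcal M=D^{-1/2}AD^{-1/2}-\frac{1}{\mathrm{vol}\, V}\delta\delta^{\mathsf T}$. The modularity of $S$ is $Q(S)=\mathbb 1_S^{\mathsf T}A\mathbb 1_S-(\mathrm{vol}\, S)^2/\mathrm{vol}\, V$. *)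

(* Defs.v *)
From HB Require Import structures.
From mathcomp Require Import all_boot all_order all_algebra.
Set Implicit Arguments. Unset Strict Implicit. Unset Printing Implicit Defensive.
Import Order.TTheory GRing.Theory Num.Theory.
Local Open Scope ring_scope.

Definition simple_graph (n : nat) (e : rel 'I_n) : Prop :=
  symmetric e /\ irreflexive e.
Definition connected_graph (n : nat) (e : rel 'I_n) : Prop :=
  forall i j : 'I_n, connect e i j.

Section Graph.
Variables (R : rcfType) (n : nat) (e : rel 'I_n).

Definition adjmx : 'M[R]_n := \matrix_(i, j) (e i j)%:R.
Definition deg (i : 'I_n) : nat := #|[set j | e i j]|.
Definition vol (S : {set 'I_n}) : R := \sum_(i in S) (deg i)%:R.
Definition degsqrt : 'cV[R]_n := \col_i Num.sqrt (deg i)%:R.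
Definition Dinvsqrt : 'M[R]_n := diag_mx (\row_i (Num.sqrt (deg i)%:R)^-1).
Definition modmx : 'M[R]_n :=
  Dinvsqrt *m adjmx *m Dinvsqrt - (vol setT)^-1 *: (degsqrt *m degsqrt^T).
Definition charvec (S : {set 'I_n}) : 'cV[R]_n := \col_i (i \in S)%:R.
Definition modularity (S : {set 'I_n}) : R :=
  ((charvec S)^T *m adjmx *m charvec S) 0 0 - (vol S) ^+ 2 / vol setT.
End Graph.

Section Angle.
Variables (R : rcfType) (n : nat).
Definition vdot (u w : 'cV[R]_n) : R := (u^T *m w) 0 0.
Definition vnorm (u : 'cV[R]_n) : R := Num.sqrt (vdot u u).
Definition absvec (v : 'cV[R]_n) : 'cV[R]_n := map_mx (fun x => `|x|) v.
Definition cos_angle (u w : 'cV[R]_n) : R := vdot u w / (vnorm u * vnorm w).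
Definition tan2_angle (u w : 'cV[R]_n) : R :=
  (1 - cos_angle u w ^+ 2) / cos_angle u w ^+ 2.
End Angle.

(* Main.v *)
Require Import Defs.
From HB Require Import structures.
From mathcomp Require Import all_boot all_order all_algebra.
From mathcomp Require Import ring lra.
Import Order.TTheory GRing.Theory Num.Theory.
Local Open Scope ring_scope.

Section Abs.
Variables (R : rcfType) (n : nat).
Implicit Types (u w z : 'cV[R]_n).

Lemma vdotE u w : vdot u w = \sum_i u i 0 * w i 0.
Proof. by rewrite /vdot mxE; apply: eq_bigr => i _; rewrite mxE. Qed.

Lemma vdotC u w : vdot u w = vdot w u.
Proof. by rewrite !vdotE; apply: eq_bigr => i _; rewrite mulrC. Qed.

Lemma vdotDl u1 u2 w : vdot (u1 + u2) w = vdot u1 w + vdot u2 w.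
Proof. by rewrite !vdotE -big_split; apply: eq_bigr => i _; rewrite mxE mulrDl. Qed.

Lemma vdotZl a u w : vdot (a *: u) w = a * vdot u w.
Proof. by rewrite !vdotE mulr_sumr; apply: eq_bigr => i _; rewrite mxE mulrA. Qed.

Lemma vdotNl u w : vdot (- u) w = - vdot u w.
Proof. by rewrite -scaleN1r vdotZl mulN1r. Qed.

Lemma vdotDr u w1 w2 : vdot u (w1 + w2) = vdot u w1 + vdot u w2.
Proof. by rewrite vdotC vdotDl !(vdotC u). Qed.

Lemma vdotZr a u w : vdot u (a *: w) = a * vdot u w.
Proof. by rewrite vdotC vdotZl vdotC. Qed.

Lemma vdotNr u w : vdot u (- w) = - vdot u w.
Proof. by rewrite vdotC vdotNl vdotC. Qed.

Lemma vdot_sym (M : 'M[R]_n) u w : M^T = M -> vdot u (M *m w) = vdot (M *m u) w.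
Proof.
move=> hM; rewrite /vdot trmx_mul hM mulmxA.
by [].
Qed.

Lemma eig_bound (M : 'M[R]_n) v z mu :
  M^T = M -> M *m v = mu *: v ->
  (forall y, - vdot y y <= vdot y (M *m y)) -> 0 < vdot v v ->
  (vdot z v)^+2 * (mu + 1) - vdot v v * vdot z z <= vdot v v * vdot z (M *m z).
Proof.
move=> hM hv hI hw.
set w := vdot v v; set b := vdot z v.
have := hI (w *: z - b *: v).
rewrite mulmxBr -!scalemxAr hv.
rewrite !(vdotDl, vdotDr, vdotNl, vdotNr, vdotZl, vdotZr).
rewrite (vdot_sym _ v z hM) hv vdotZl (vdotC v z) -/b -/w.
move=> h.
have h2 : 0 <= w * (w * vdot z (M *m z) - (b ^+ 2 * (mu + 1) - w * vdot z z)) by nra.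
by rewrite -subr_ge0; rewrite pmulr_rge0 in h2.
Qed.
End Abs.
Lemma mulmx_entry (R : pzRingType) (n : nat) (M : 'M[R]_n) (z : 'cV[R]_n) i :
  (M *m z) i 0 = \sum_j M i j * z j 0.
Proof. by rewrite mxE. Qed.

Section G.
Variables (R : rcfType) (n : nat) (e : rel 'I_n).
Hypothesis hsym : symmetric e.

Local Notation d i := ((deg e i)%:R : R).
Local Notation sq i := (Num.sqrt ((deg e i)%:R : R)).
Local Notation V := (vol R e setT).
Local Notation a i j := (((e i j) : nat)%:R : R).

Lemma degE i : d i = \sum_j a i j.
Proof.
rewrite -natr_sum /deg; congr (_%:R).
rewrite -sum1_card big_mkcond /=; apply: eq_bigr => j _.
by rewrite !inE; case: (e i j).
Qed.

Lemma volT : V = \sum_i d i.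
Proof. by rewrite /vol; apply: eq_bigl => i; rewrite inE. Qed.

Lemma mE i j : modmx R e i j = (sq i)^-1 * a i j * (sq j)^-1 - V^-1 * (sq i * sq j).
Proof.
rewrite /modmx /Dinvsqrt mul_mx_diag mul_diag_mx !mxE big_ord1 /degsqrt !mxE.
by [].
Qed.

Lemma modmx_sym : (modmx R e)^T = modmx R e.
Proof. by apply/matrixP => i j; rewrite mxE !mE hsym; congr (_ - _ * _); ring. Qed.
Hypothesis hpos : forall i, (0 < deg e i)%N.

Lemma d_gt0 i : 0 < d i. Proof. by rewrite ltr0n. Qed.
Lemma sq_neq0 i : sq i != 0.
Proof. by rewrite sqrtr_eq0 -ltNge d_gt0. Qed.
Lemma sq2 i : sq i ^+ 2 = d i.
Proof. by rewrite sqr_sqrtr // ler0n. Qed.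

Lemma alg1 (F : fieldType) (si sj xi xj W aij : F) : si != 0 -> sj != 0 ->
  si * xi * ((si^-1 * aij / sj - W * (si * sj)) * (sj * xj)) =
  aij * (xi * xj) - W * (si * (si * xi) * (sj * (sj * xj))).
Proof. by move=> hi hj; field; rewrite ?hi ?hj. Qed.

Lemma swap (F : 'I_n -> R) :
  \sum_i \sum_j a i j * F j = \sum_i \sum_j a i j * F i.
Proof.
rewrite exchange_big; apply: eq_bigr => i _; apply: eq_bigr => j _.
by rewrite hsym.
Qed.

Lemma V_gt0 (i0 : 'I_n) : 0 < V.
Proof.
rewrite volT (bigD1 i0) //=; apply: (lt_le_trans (d_gt0 i0)).
by rewrite lerDl; apply: sumr_ge0 => *; exact: ler0n.
Qed.

Lemma lowerI (i0 : 'I_n) (y : 'cV[R]_n) : - vdot y y <= vdot y (modmx R e *m y).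
Proof.
pose x i := y i 0 / sq i.
pose s := \sum_i sq i * y i 0.
pose P := \sum_i \sum_j a i j * x i ^+ 2.
pose X := \sum_i \sum_j a i j * (x i * x j).
have hyx i : y i 0 = sq i * x i by rewrite /x mulrC divfK ?sq_neq0.
have E1 : vdot y (modmx R e *m y) = X - V^-1 * s ^+ 2.
  rewrite /vdot mxE /X /s expr2 mulrA.
  rewrite -mulrA big_distrlr /= mulr_sumr -sumrB; apply: eq_bigr => i _.
  rewrite !mxE !mulr_sumr -sumrB; apply: eq_bigr => j _.
  rewrite (mE i j) (hyx i) (hyx j).
  have := sq_neq0 i; have := sq_neq0 j => hj hi.
  by apply: alg1.
have E2 : vdot y y = P.
  rewrite vdotE /P; apply: eq_bigr => i _.
  by rewrite -mulr_suml -degE -sq2 (hyx i); ring.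
have E3 : s = \sum_i \sum_j a i j * x i.
  rewrite /s; apply: eq_bigr => i _.
  by rewrite -mulr_suml -degE (hyx i) mulrA -expr2 sq2.
have E4 : V = \sum_i \sum_j a i j.
  by rewrite volT; apply: eq_bigr => i _; rewrite degE.
have hV := V_gt0 i0.
pose c := s / V.
have E0 : 0 <= \sum_i \sum_j a i j * (x i + x j - 2 * c) ^+ 2.
  apply: sumr_ge0 => i _; apply: sumr_ge0 => j _.
  by apply: mulr_ge0; [rewrite ler0n | apply: sqr_ge0].
have E5 : \sum_i \sum_j a i j * (x i + x j - 2 * c) ^+ 2 =
   \sum_i \sum_j a i j * x i ^+ 2 + \sum_i \sum_j a i j * x j ^+ 2
   + 2 * \sum_i \sum_j a i j * (x i * x j)
   + (- 4 * c) * \sum_i \sum_j a i j * x i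
   + (- 4 * c) * \sum_i \sum_j a i j * x j
   + (4 * c ^+ 2) * \sum_i \sum_j a i j.
  rewrite !mulr_sumr -!big_split /=; apply: eq_bigr => i _.
  rewrite !mulr_sumr -!big_split /=; apply: eq_bigr => j _.
  ring.
rewrite E5 (swap (fun j => x j ^+ 2)) (swap x) -E3 -E4 -/P -/X in E0.
rewrite E1 E2.
have hk : V^-1 * V = 1 by rewrite mulVf // gt_eqF.
have hk0 : 0 <= V^-1 by rewrite invr_ge0 ltW.
have hc1 : c * s = V^-1 * s ^+ 2 by rewrite /c; ring.
have hc2 : c ^+ 2 * V = V^-1 * s ^+ 2.
  by rewrite /c; field; rewrite gt_eqF.
have hs : 0 <= V^-1 * s ^+ 2 by rewrite mulr_ge0 // sqr_ge0.
nra.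
Qed.

Lemma alg2 (F : fieldType) (si sj ti tj W aij : F) : si != 0 -> sj != 0 ->
  ti * si * ((si^-1 * aij / sj - W * (si * sj)) * (tj * sj)) =
  ti * tj * aij - W * (ti * si ^+ 2 * (tj * sj ^+ 2)).
Proof. by move=> hi hj; field; rewrite ?hi ?hj. Qed.

Section U.
Variables (i0 : 'I_n) (v : 'cV[R]_n).
Let S := [set i | 0 <= v i 0].
Let c i : R := ((0 <= v i 0)%R : nat)%:R.
Let sg i : R := if 0 <= v i 0 then 1 else -1.
Let u : 'cV[R]_n := \col_i (sg i * sq i).
Let volS := \sum_i c i * d i.

Lemma sgE i : sg i = 2 * c i - 1.
Proof. by rewrite /sg /c; case: (0 <= v i 0) => /=; ring. Qed.

Lemma Q1 : modularity R e S = \sum_i \sum_j a i j * (c i * c j) - volS ^+ 2 * V^-1.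
Proof.
rewrite /modularity mxE; congr (_ - _ * _).
  rewrite exchange_big /=; apply: eq_bigr => j _.
  rewrite !mxE mulr_suml; apply: eq_bigr => i _.
  by rewrite !mxE /c !inE; ring.
rewrite /vol /volS big_mkcond /=; congr (_ ^+ 2); apply: eq_bigr => i _.
by rewrite /c inE; case: (0 <= v i 0) => /=; ring.
Qed.

Lemma U1 : vdot u (modmx R e *m u) =
  \sum_i \sum_j a i j * (sg i * sg j) - V^-1 * (\sum_i sg i * d i) ^+ 2.
Proof.
rewrite /vdot mxE expr2 big_distrlr /= mulr_sumr -sumrB; apply: eq_bigr => i _.
rewrite mulmx_entry [u^T 0 i]mxE !mulr_sumr -sumrB; apply: eq_bigr => j _.
rewrite (mE i j) /u !mxE.
rewrite alg2 ?sq_neq0 // !sq2; ring.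
Qed.

Lemma uu : vdot u u = V.
Proof.
rewrite vdotE volT; apply: eq_bigr => i _; rewrite mxE.
have hs : sq i * sq i = d i by rewrite -expr2 sq2.
by rewrite mulrACA hs /sg; case: (0 <= v i 0); ring.
Qed.

Lemma uv : vdot u v = vdot (absvec v) (degsqrt R e).
Proof.
rewrite !vdotE; apply: eq_bigr => i _; rewrite !mxE /sg.
case: ifP => h.
  by rewrite ger0_norm //; ring.
by rewrite ltr0_norm ?ltNge ?h //; ring.
Qed.

Lemma uMu : vdot u (modmx R e *m u) = 4 * modularity R e S.
Proof.
have hV := V_gt0 i0.
have e1 : \sum_i sg i * d i = 2 * volS - V.
  rewrite volT /volS mulr_sumr -sumrB; apply: eq_bigr => i _.
  by rewrite sgE; ring.
have e2 : \sum_i \sum_j a i j * c i = volS.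
  by rewrite /volS; apply: eq_bigr => i _; rewrite -mulr_suml -degE mulrC.
have e3 : \sum_i \sum_j a i j * (sg i * sg j) =
   4 * \sum_i \sum_j a i j * (c i * c j) + (-2) * \sum_i \sum_j a i j * c i
   + (-2) * \sum_i \sum_j a i j * c j + \sum_i \sum_j a i j.
  rewrite !mulr_sumr -!big_split /=; apply: eq_bigr => i _.
  rewrite !mulr_sumr -!big_split /=; apply: eq_bigr => j _.
  by rewrite !sgE; ring.
have e4 : \sum_i \sum_j a i j = V.
  by rewrite volT; apply: eq_bigr => i _; rewrite degE.
rewrite U1 e1 e3 (swap c) e2 e4 Q1.
by field; rewrite gt_eqF.
Qed.
End U.
End G.

Theorem corollary5p3 (R : rcfType) (n : nat) (e : rel 'I_n)
  (hsimple : simple_graph e) (hconn : connected_graph e)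
  (v : 'cV[R]_n) (mu : R)
  (hv0 : v != 0) (heig : modmx R e *m v = mu *: v) (hmu : 0 < mu)
  (htan : tan2_angle (absvec v) (degsqrt R e) < mu) :
  0 < modularity R e [set i | 0 <= v i 0].
Proof.
case: hsimple => hsym hirr.
have [k hk] : exists k, v k 0 != 0.
  apply/existsP; move: hv0; apply: contraR; rewrite negb_exists => /forallP h.
  apply/eqP/matrixP => i j; rewrite ord1 mxE; exact/eqP/negbNE/h.
have hpos : forall i, (0 < deg e i)%N.
  move=> i; rewrite lt0n; apply/negP => /eqP h0.
  have hne : forall j, e i j = false.
    move=> j; move/eqP: h0; rewrite cards_eq0 => /eqP/setP/(_ j).
    by rewrite !inE.
  have hki : k = i.
    case/connectP: (hconn i k) => p.
    case: p => [|z p] /=; first by move=> _ ->.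
    by rewrite hne.
  have hrow : (modmx R e *m v) i 0 = 0.
    rewrite mulmx_entry big1 // => j _.
    by rewrite mE /deg -/(deg e i) h0 sqrtr0 invr0 !(mul0r, mulr0, subrr).
  move: hrow; rewrite heig mxE => /eqP; rewrite mulf_eq0 gt_eqF //= -hki.
  by rewrite (negbTE hk).
pose w := vdot v v.
have hw : 0 < w.
  rewrite /w vdotE (bigD1 k) //=; apply: (lt_le_trans (y := v k 0 * v k 0)).
    by rewrite -expr2 exprn_even_gt0.
  by rewrite lerDl; apply: sumr_ge0 => i _; rewrite -expr2 sqr_ge0.
pose u : 'cV[R]_n := \col_i ((fun i0 : 'I_n => if 0 <= v i0 0 then 1 else -1) i *
           Num.sqrt ((deg e i)%:R : R)).
have key := @eig_bound R n _ v u mu (@modmx_sym R n e hsym) heig (@lowerI R n e hsym hpos k) hw.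
rewrite (@uMu R n e hsym hpos k) (@uu R n e v) (@uv R n e v) -/w in key.
pose a := vdot (absvec v) (degsqrt R e).
pose V := vol R e setT.
have hV : 0 < V := @V_gt0 R n e hpos k.
have ha : 0 < a.
  rewrite /a vdotE (bigD1 k) //=; apply: (lt_le_trans (y := absvec v k 0 * degsqrt R e k 0)).
    rewrite !mxE mulr_gt0 ?normr_gt0 //.
    by rewrite sqrtr_gt0 ltr0n.
  rewrite lerDl; apply: sumr_ge0 => i _; rewrite !mxE mulr_ge0 ?sqrtr_ge0 //.
have hvabs : vdot (absvec v) (absvec v) = w.
  rewrite /w !vdotE; apply: eq_bigr => i _; rewrite !mxE -!expr2.
  by rewrite real_normK ?num_real.
have hdd : vdot (degsqrt R e) (degsqrt R e) = V.
  rewrite vdotE /V (@volT R n e); apply: eq_bigr => i _; rewrite !mxE -expr2.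
  by rewrite sqr_sqrtr ?ler0n.
have htan2 : w * V - a ^+ 2 < mu * a ^+ 2.
  move: htan; rewrite /tan2_angle /cos_angle /vnorm hvabs hdd -/a.
  have -> : (a / (Num.sqrt w * Num.sqrt V)) ^+ 2 = a ^+ 2 / (w * V).
    rewrite expr_div_n exprMn !sqr_sqrtr // ltW //.
  have -> : (1 - a ^+ 2 / (w * V)) / (a ^+ 2 / (w * V)) = (w * V - a ^+ 2) / a ^+ 2.
    field; rewrite ?gt_eqF ?mulr_gt0 ?exprn_gt0 //.
  by rewrite ltr_pdivrMr ?exprn_gt0.
rewrite -/a -/V in key. have : 0 < w * (4 * modularity R e [set i | 0 <= v i 0]) by lra.
rewrite pmulr_rgt0 // => h.
lra.
Qed.
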